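(* Let $E$ be an imaginary quadratic field with ring of integers $\mathfrak{o}_E$ and fundamental discriminant $\Delta_E$, and let $\iota\in\mathrm{Emb}(\mathfrak{o}_E,\mathcal{O})$. Then $\iota(\mathfrak{o}_E)=\iota(E)\cap\mathcal{O}$, and there exists an element $a\in\iota(E)\cap V_D$ with $\mathrm{Nm}(a)=-\Delta_E$. Moreover, any such element $a$ belongs to $\iota(E)\cap L(\mathcal{O})$, and $\mathbb{Z}a=\iota(E)\cap L(\mathcal{O})$.
   Context: $D$ is a definite quaternion algebra over $\mathbb{Q}$ with standard involution $\sigma$, reduced norm $\mathrm{Nm}(x)=x\sigma(x)$, trace $\mathrm{Tr}(x)=x+\sigma(x)$; $\mathcal{O}$ is an Eichler order in $D$. $V_D=\{x\in D:\mathrm{Tr}(x)=0\}$ and $L(\mathcal{O})=\{x\in\mathbb{Z}+2\mathcal{O}:\mathrm{Tr}(x)=0\}$. An embedding $E\hookrightarrow D$ is an injective $\mathbb{Q}$-algebra homomorphism; $\mathrm{Emb}(\mathfrak{o}_E,\mathcal{O})$ (optimal embeddings) is the set of embeddings $\iota:E\hookrightarrow D$ such that $\iota(E)\cap\mathcal{O}$ is isomorphic to $\mathfrak{o}_E$ as a ring. *)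

(* Defs.v *)
From mathcomp Require Import all_boot all_order all_algebra.
Set Implicit Arguments. Unset Strict Implicit. Unset Printing Implicit Defensive.
Import Order.TTheory GRing.Theory Num.Theory.
Local Open Scope ring_scope.

(* Quaternion algebra D = (qa, qb)_Q over Q : basis 1, i, j, k = ij,   *)
(* i^2 = qa, j^2 = qb, ij = -ji.  It is definite iff qa < 0 and qb < 0. *)
(* Every quaternion algebra over Q is of this form.                    *)
Record quat := Quat { q0 : rat; q1 : rat; q2 : rat; q3 : rat }.

Definition qadd (x y : quat) : quat :=
  Quat (q0 x + q0 y) (q1 x + q1 y) (q2 x + q2 y) (q3 x + q3 y).

Definition qscale (c : rat) (x : quat) : quat :=
  Quat (c * q0 x) (c * q1 x) (c * q2 x) (c * q3 x).

Definition qscal (c : rat) : quat := Quat c 0 0 0.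

Definition qone : quat := qscal 1.

Definition qmul (qa qb : rat) (x y : quat) : quat :=
  Quat (q0 x * q0 y + qa * q1 x * q1 y + qb * q2 x * q2 y - qa * qb * q3 x * q3 y)
       (q0 x * q1 y + q1 x * q0 y - qb * q2 x * q3 y + qb * q3 x * q2 y)
       (q0 x * q2 y + q2 x * q0 y + qa * q1 x * q3 y - qa * q3 x * q1 y)
       (q0 x * q3 y + q3 x * q0 y + q1 x * q2 y - q2 x * q1 y).

Definition qconj (x : quat) : quat := Quat (q0 x) (- q1 x) (- q2 x) (- q3 x).

(* reduced trace Tr(x) = x + sigma(x) and reduced norm Nm(x) = x sigma(x),
   both as elements of D (they lie in Q = Q.1) *)
Definition qTr (x : quat) : quat := qadd x (qconj x).
Definition qNm (qa qb : rat) (x : quat) : quat := qmul qa qb x (qconj x).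

Definition in_VD (x : quat) : Prop := qTr x = qscal 0.

Definition zcomb (z0 z1 z2 z3 : int) (e0 e1 e2 e3 : quat) : quat :=
  qadd (qadd (qscale z0%:~R e0) (qscale z1%:~R e1))
       (qadd (qscale z2%:~R e2) (qscale z3%:~R e3)).

Definition qcomb (c0 c1 c2 c3 : rat) (e0 e1 e2 e3 : quat) : quat :=
  qadd (qadd (qscale c0 e0) (qscale c1 e1)) (qadd (qscale c2 e2) (qscale c3 e3)).

Definition is_full_lattice (O : quat -> Prop) : Prop :=
  exists e0 e1 e2 e3 : quat,
    (forall x, O x <-> exists z0 z1 z2 z3 : int, x = zcomb z0 z1 z2 z3 e0 e1 e2 e3)
    /\ (forall x : quat, exists c0 c1 c2 c3 : rat, x = qcomb c0 c1 c2 c3 e0 e1 e2 e3).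

Definition is_order (qa qb : rat) (O : quat -> Prop) : Prop :=
  is_full_lattice O /\ O qone /\ (forall x y, O x -> O y -> O (qmul qa qb x y)).

Definition is_maximal_order (qa qb : rat) (O : quat -> Prop) : Prop :=
  is_order qa qb O /\
  (forall O' : quat -> Prop, is_order qa qb O' -> (forall x, O x -> O' x) ->
     forall x, O' x -> O x).

Definition is_Eichler_order (qa qb : rat) (O : quat -> Prop) : Prop :=
  exists O1 O2 : quat -> Prop,
    is_maximal_order qa qb O1 /\ is_maximal_order qa qb O2 /\
    (forall x, O x <-> O1 x /\ O2 x).

Definition in_LO (O : quat -> Prop) (x : quat) : Prop :=
  (exists (n : int) (y : quat), O y /\ x = qadd (qscal n%:~R) (qscale 2 y))
  /\ in_VD x.

(* Imaginary quadratic field E = Q(sqrt d), d squarefree negative int. *)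
(* An element QF p q stands for p + q sqrt d.                          *)
Record qf := QF { qre : rat; qim : rat }.

Definition squarefree_int (d : int) : Prop :=
  forall n : nat, (n ^ 2 %| `|d|)%N -> n = 1%N.

Definition imag_quadratic (d : int) : Prop := d < 0 /\ squarefree_int d.

Definition eadd (x y : qf) : qf := QF (qre x + qre y) (qim x + qim y).
Definition emul (d : int) (x y : qf) : qf :=
  QF (qre x * qre y + d%:~R * qim x * qim y) (qre x * qim y + qim x * qre y).
Definition escale (c : rat) (x : qf) : qf := QF (c * qre x) (c * qim x).
Definition eone : qf := QF 1 0.
Definition ezero : qf := QF 0 0.
Definition eint (n : int) : qf := QF n%:~R 0.

Fixpoint eexp (d : int) (x : qf) (n : nat) : qf :=
  match n with 0%N => eone | n'.+1 => emul d x (eexp d x n') end.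

(* value at x of the monic integer polynomial X^(size cs) + sum_i cs_i X^i *)
Definition emonic_eval (d : int) (cs : seq int) (x : qf) : qf :=
  eadd (eexp d x (size cs))
       (foldr eadd ezero [seq emul d (eint (nth 0 cs i)) (eexp d x i) | i <- iota 0 (size cs)]).

Definition in_oE (d : int) (x : qf) : Prop :=
  exists cs : seq int, emonic_eval d cs x = ezero.

Definition eTr (x : qf) : rat := 2 * qre x.

Definition is_fund_disc (d : int) (Delta : int) : Prop :=
  exists w1 w2 : qf,
    (forall x, in_oE d x <-> exists m n : int, x = eadd (escale m%:~R w1) (escale n%:~R w2))
    /\ Delta%:~R = eTr (emul d w1 w1) * eTr (emul d w2 w2) - eTr (emul d w1 w2) ^+ 2.

Definition is_embedding (qa qb : rat) (d : int) (iota : qf -> quat) : Prop :=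
  injective iota /\
  (forall x y, iota (eadd x y) = qadd (iota x) (iota y)) /\
  (forall x y, iota (emul d x y) = qmul qa qb (iota x) (iota y)) /\
  (forall (c : rat) x, iota (escale c x) = qscale c (iota x)) /\
  iota eone = qone.

Definition in_image (iota : qf -> quat) (z : quat) : Prop := exists y, iota y = z.

Definition is_optimal_embedding (qa qb : rat) (d : int) (O : quat -> Prop)
    (iota : qf -> quat) : Prop :=
  is_embedding qa qb d iota /\
  exists f : qf -> quat,
    (forall x, in_oE d x -> in_image iota (f x) /\ O (f x)) /\
    (forall x y, in_oE d x -> in_oE d y -> f x = f y -> x = y) /\
    (forall z, in_image iota z -> O z -> exists x, in_oE d x /\ f x = z) /\
    (forall x y, in_oE d x -> in_oE d y -> f (eadd x y) = qadd (f x) (f y)) /\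
    (forall x y, in_oE d x -> in_oE d y -> f (emul d x y) = qmul qa qb (f x) (f y)) /\
    f eone = qone.

(* Main.v *)
Require Import Defs.
From mathcomp Require Import all_boot all_order all_algebra all_field.
From mathcomp Require Import zify ring lra.
Import Order.TTheory GRing.Theory Num.Theory.
Local Open Scope ring_scope.
Set Implicit Arguments. Unset Strict Implicit.

Lemma quatE (x y : quat) : q0 x = q0 y -> q1 x = q1 y -> q2 x = q2 y -> q3 x = q3 y -> x = y.
Proof. by case: x => ????; case: y => ???? /= -> -> -> ->. Qed.
Lemma qfE (x y : qf) : qre x = qre y -> qim x = qim y -> x = y.
Proof. by case: x => ??; case: y => ?? /= -> ->. Qed.

Section Alg.
Variables (d : int) (s : algC).
Hypothesis hs : s ^+ 2 = d%:~R.

Definition phi (x : qf) : algC := ratr (qre x) + ratr (qim x) * s.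

Lemma phiD x y : phi (eadd x y) = phi x + phi y.
Proof. rewrite /phi /= !rmorphD /=; ring. Qed.
Lemma phiM x y : phi (emul d x y) = phi x * phi y.
Proof.
rewrite /phi /= !rmorphD !rmorphM /= rmorph_int -hs; ring.
Qed.
Lemma phi1 : phi eone = 1.
Proof. by rewrite /phi /= rmorph1 rmorph0 mul0r addr0. Qed.
Lemma phi0 : phi ezero = 0.
Proof. by rewrite /phi /= rmorph0 mul0r addr0. Qed.
Lemma phi_int n : phi (eint n) = n%:~R.
Proof. by rewrite /phi /= rmorph_int rmorph0 mul0r addr0. Qed.
Lemma phiX x n : phi (eexp d x n) = phi x ^+ n.
Proof. elim: n => [|n IH] /=; first by rewrite phi1 expr0. by rewrite phiM IH exprS. Qed.
Lemma phi_foldr (l : seq qf) : phi (foldr eadd ezero l) = \sum_(y <- l) phi y.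
Proof. elim: l => [|a l IH] /=; first by rewrite big_nil phi0. by rewrite big_cons phiD IH. Qed.

Lemma phi_Aint cs x : emonic_eval d cs x = ezero -> phi x \in Aint.
Proof.
move=> h.
have := f_equal phi h; rewrite phi0 /emonic_eval phiD phiX phi_foldr big_map.
have hI : iota 0 (size cs) = index_iota 0 (size cs) by rewrite /index_iota subn0.
rewrite hI big_mkord.
set n := size cs => E.
pose p : {poly algC} := 'X^n + \poly_(i < n) (cs`_i)%:~R.
apply: (@root_monic_Aint p).
- rewrite /root /p hornerD hornerXn horner_poly.
  apply/eqP; rewrite -[X in _ = X]E; congr (_ + _); apply: eq_bigr => i _.
  by rewrite phiM phi_int phiX.
- rewrite monicE /p lead_coefDl ?lead_coefXn // size_polyXn ltnS; exact: size_poly.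
- apply/polyOverP => i. rewrite coefD coefXn coef_poly.
  apply: rpredD; [exact: rpred_nat | by case: ifP; rewrite ?rpred_int ?rpred0].
Qed.
End Alg.

Lemma oE_int d x : in_oE d x ->
  (2 * qre x \is a Num.int) /\ (qre x ^+ 2 - d%:~R * qim x ^+ 2 \is a Num.int).
Proof.
case=> cs h.
set s : algC := sqrtC d%:~R.
have hs : s ^+ 2 = d%:~R by rewrite sqrtCK.
have hs' : (- s) ^+ 2 = d%:~R by rewrite sqrrN.
have A1 := @phi_Aint d s hs cs x h; have A2 := @phi_Aint d (- s) hs' cs x h.
split.
- rewrite -Cint_rat; apply: Cint_rat_Aint; first exact: Crat_rat.
  have -> : ratr (2 * qre x) = phi s x + phi (- s) x.
    by rewrite /phi rmorphM /= rmorph_nat; ring.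
  exact: rpredD.
- rewrite -Cint_rat; apply: Cint_rat_Aint; first exact: Crat_rat.
  have -> : ratr (qre x ^+ 2 - d%:~R * qim x ^+ 2) = phi s x * phi (- s) x.
    rewrite /phi rmorphB rmorphM rmorphXn rmorphXn /= rmorph_int -hs; ring.
  exact: rpredM.
Qed.

Lemma sqfree_int d (r : rat) : squarefree_int d ->
  d%:~R * r ^+ 2 \is a Num.int -> r \is a Num.int.
Proof.
move=> hsq /intrP [K hK].
set n := numq r; set m := denq r.
have e : d * n ^+ 2 = K * m ^+ 2.
  apply: (@intr_inj rat); rewrite !intrM.
  rewrite /n numqE -hK; ring.
have e' := f_equal absz e; rewrite !abszM in e'.
have hdv : (`|m| ^ 2 %| `|d| * `|n| ^ 2)%N by rewrite -!mulnn e' dvdn_mull.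
have hc : coprime (`|m| ^ 2) (`|n| ^ 2).
  by apply/coprimeXl/coprimeXr; rewrite coprime_sym coprime_num_den.
rewrite Gauss_dvdl // in hdv.
have := hsq _ hdv => hm.
rewrite Qint_def -/m; apply/eqP.
have hm0 : 0 < m by exact: denq_gt0.
lia.
Qed.

Definition om (d : int) : qf := if (d %% 4)%Z == 1 then QF (1/2) (1/2) else QF 0 1.
Definition ocomb d (u v : int) : qf :=
  QF (u%:~R + v%:~R * qre (om d)) (v%:~R * qim (om d)).

Lemma dec2 (T : int) : exists a r, T = 2 * a + r /\ (r = 0 \/ r = 1).
Proof. exists (T %/ 2)%Z, (T %% 2)%Z. split; lia. Qed.

Lemma dmod4 (d : int) : squarefree_int d ->
  exists j, (d = 4 * j + 1 /\ (d %% 4)%Z = 1) \/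
            ((d = 4 * j + 2 \/ d = 4 * j + 3) /\ (d %% 4)%Z != 1).
Proof.
move=> hsq; exists (d %/ 4)%Z.
have h0 : (d %% 4)%Z != 0.
  apply/negP => /eqP h.
  have : (2 ^ 2 %| `|d|)%N.
    have -> : d = 4 * (d %/ 4)%Z by lia.
    by rewrite abszM dvdn_mulr.
  by move/hsq.
have h1 := divz_eq d 4.
have h2 : (0 <= d %% 4 < 4)%Z by lia.
case: (eqVneq (d %% 4)%Z 1) => h; [left | right]; lia.
Qed.

Lemma int_of (r : rat) : r \is a Num.int -> exists n : int, r = n%:~R.
Proof. by move/intrP. Qed.

Lemma oE_char d : imag_quadratic d -> forall x,
  in_oE d x <-> exists u v, x = ocomb d u v.
Proof.
case=> hd hsq x; split.
- move=> hx; have [hT hN] := @oE_int d x hx.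
  have [T eT] := int_of hT; have [N eN] := int_of hN.
  have hQ : (2 * qim x) \is a Num.int.
    apply: (@sqfree_int d _ hsq).
    have -> : d%:~R * (2 * qim x) ^+ 2 = (T * T - 4 * N)%:~R.
      rewrite !(intrD, intrM, intrN) -eT -eN /=; ring.
    exact: rpred_int.
  have [Q eQ] := int_of hQ.
  have eI : T * T - d * (Q * Q) = 4 * N.
    apply: (@intr_inj rat); rewrite !(intrD, intrM, intrN) -eT -eQ -eN /=; ring.
  have [a [r1 [ea hr1]]] := dec2 T; have [b [r2 [eb hr2]]] := dec2 Q.
  have [j [[dj dm] | [dj dm]]] := @dmod4 d hsq.
  + have er : r1 = r2.
      rewrite ea eb dj in eI. case: hr1 => ?; case: hr2 => ?; subst; lia.
    exists (a - b), Q; apply: qfE; rewrite /ocomb /om dm eqxx /=.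
    * have -> : qre x = T%:~R / 2 by rewrite -eT; field.
      rewrite ea eb er !(intrD, intrM, intrB) /=; field; done.
    * rewrite -eQ; field; done.
  + have [er1 er2] : r1 = 0 /\ r2 = 0.
      rewrite ea eb in eI. case: hr1 => ?; case: hr2 => ?; case: dj => dj; subst; lia.
    exists a, b; apply: qfE; rewrite /ocomb /om (negPf dm) /=.
    * have -> : qre x = T%:~R / 2 by rewrite -eT; field.
      rewrite ea er1 !(intrD, intrM) /=; field; done.
    * have -> : qim x = Q%:~R / 2 by rewrite -eQ; field.
      rewrite eb er2 !(intrD, intrM) /=; field; done.
- case=> u [v ->].
  have [j [[dj dm] | [dj dm]]] := @dmod4 d hsq.
  + exists [:: u * u + u * v - v * v * j; - (2 * u + v)].
    rewrite /emonic_eval /ocomb /om dm eqxx /=.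
    apply: qfE => /=; rewrite dj !(intrD, intrM, intrN, intrB) /=; field; done.
  + exists [:: u * u - v * v * d; - (2 * u)].
    rewrite /emonic_eval /ocomb /om (negPf dm) /=.
    apply: qfE => /=; rewrite !(intrD, intrM, intrN, intrB) /=; field; done.
Qed.

Definition tt (d : int) : int := if (d %% 4)%Z == 1 then 1 else 0.
Definition cc (d : int) : int := if (d %% 4)%Z == 1 then (d %/ 4)%Z else d.

Lemma om_sq d : squarefree_int d -> emul d (om d) (om d) = ocomb d (cc d) (tt d).
Proof.
move=> hsq; have [j [[dj dm] | [dj dm]]] := @dmod4 d hsq.
- have hj : (d %/ 4)%Z = j by lia.
  rewrite /cc /tt /ocomb /om dm eqxx hj; apply: qfE => /=; rewrite ?dj.
  + rewrite !(intrD, intrM) /=; field; done.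
  + field; done.
- rewrite /cc /tt /ocomb /om (negPf dm); apply: qfE => /=; ring.
Qed.

Lemma roots d th : imag_quadratic d ->
  emul d th th = eadd (eint (cc d)) (escale (tt d)%:~R th) ->
  th = om d \/ th = ocomb d (tt d) (-1).
Proof.
case=> hd hsq; have [j [[dj dm] | [dj dm]]] := @dmod4 d hsq.
- have hj : (d %/ 4)%Z = j by lia.
  rewrite /cc /tt /ocomb /om dm eqxx hj.
  case: th => a b E.
  have E1 := f_equal qre E; have E2 := f_equal qim E; move: E1 E2 => /= E1 E2.
  have hdr : (d%:~R : rat) < 0 by rewrite ltrz0.
  have hdj : (d%:~R : rat) = 4 * j%:~R + 1 by rewrite dj !(intrD, intrM).
  have hb : b * (2 * a - 1) = 0 by lra.
  move/eqP: hb; rewrite mulf_eq0 => /orP [/eqP hb0 | /eqP ha].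
  + exfalso. subst b.
    have : (2 * a - 1) ^+ 2 = d%:~R by rewrite hdj; lra.
    have := sqr_ge0 (2 * a - 1); lra.
  + have ea : a = 1/2 by lra.
    have hb2 : (b - 1/2) * (b + 1/2) = 0.
      have hd0 : (d%:~R : rat) != 0 by apply: ltr0_neq0.
      apply: (mulfI hd0); rewrite mulr0.
      rewrite ea in E1. lra.
    move/eqP: hb2; rewrite mulf_eq0 => /orP [/eqP h | /eqP h].
    * by left; apply: qfE => /=; lra.
    * by right; apply: qfE => /=; lra.
- rewrite /cc /tt /ocomb /om (negPf dm).
  case: th => a b E.
  have E1 := f_equal qre E; have E2 := f_equal qim E; move: E1 E2 => /= E1 E2.
  have hdr : (d%:~R : rat) < 0 by rewrite ltrz0.
  have hab : a * b = 0 by lra.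
  move/eqP: hab; rewrite mulf_eq0 => /orP [/eqP ha | /eqP hb].
  + subst a.
    have hb2 : (b - 1) * (b + 1) = 0.
      have hd0 : (d%:~R : rat) != 0 by apply: ltr0_neq0.
      apply: (mulfI hd0); rewrite mulr0. lra.
    move/eqP: hb2; rewrite mulf_eq0 => /orP [/eqP h | /eqP h].
    * by left; apply: qfE => /=; lra.
    * by right; apply: qfE => /=; lra.
  + exfalso; subst b.
    have := sqr_ge0 a; rewrite expr2; lra.
Qed.


Section Emb.
Variables (qa qb : rat) (d : int) (iota : qf -> quat).
Hypothesis hd : d < 0.
Hypothesis he : is_embedding qa qb d iota.

Definition Y := iota (QF 0 1).

Lemma iota_gen p q : iota (QF p q) = qadd (qscale p qone) (qscale q Y).
Proof.
case: he => _ [hadd [_ [hsc h1]]].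
have -> : QF p q = eadd (escale p eone) (escale q (QF 0 1)).
  by apply: qfE => /=; ring.
by rewrite hadd !hsc h1.
Qed.

Lemma Y0 : q0 Y = 0 /\ qa * q1 Y ^+ 2 + qb * q2 Y ^+ 2 - qa * qb * q3 Y ^+ 2 = d%:~R.
Proof.
case: he => _ [_ [hmul _]].
have := hmul (QF 0 1) (QF 0 1).
rewrite /= !iota_gen.
case: Y => y0 y1 y2 y3 /= E.
have E0 := f_equal q0 E; have E1 := f_equal q1 E; have E2 := f_equal q2 E; have E3 := f_equal q3 E.
move: E0 E1 E2 E3 => /= E0 E1 E2 E3.
have e1 : y0 * y1 = 0 by lra.
have e2 : y0 * y2 = 0 by lra.
have e3 : y0 * y3 = 0 by lra.
have e0 : y0 ^+ 2 + (qa * y1 ^+ 2 + qb * y2 ^+ 2 - qa * qb * y3 ^+ 2) = d%:~R by lra.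
have hy0 : y0 = 0.
  have : y0 * (y0 ^+ 2 - d%:~R) = 0.
    have -> : y0 * (y0 ^+ 2 - d%:~R) = y0 * (y0 ^+ 2 - d%:~R) - y0 * (y0 ^+ 2 + (qa * y1 ^+ 2 + qb * y2 ^+ 2 - qa * qb * y3 ^+ 2) - d%:~R) by rewrite e0 subrr mulr0 subr0.
    have -> : y0 * (y0 ^+ 2 - d%:~R) - y0 * (y0 ^+ 2 + (qa * y1 ^+ 2 + qb * y2 ^+ 2 - qa * qb * y3 ^+ 2) - d%:~R) = - (qa * y1 * (y0 * y1) + qb * y2 * (y0 * y2) - qa * qb * y3 * (y0 * y3)) by ring.
    by rewrite e1 e2 e3; ring.
  move/eqP; rewrite mulf_eq0 => /orP [/eqP //|].
  have : 0 < y0 ^+ 2 - d%:~R.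
    have : (d%:~R : rat) < 0 by rewrite ltrz0.
    have := sqr_ge0 y0. lra.
  by move=> /lt0r_neq0 /negPf ->.
split => //.
by move: e0; rewrite hy0 expr0n /= add0r.
Qed.
End Emb.

Section Emb2.
Variables (qa qb : rat) (d : int) (iota : qf -> quat).
Hypothesis hd : d < 0.
Hypothesis he : is_embedding qa qb d iota.

Lemma iota_expl p q : iota (QF p q) =
  Quat p (q * q1 (Y iota)) (q * q2 (Y iota)) (q * q3 (Y iota)).
Proof.
rewrite (iota_gen he); have [h0 _] := Y0 hd he.
by apply: quatE => /=; rewrite ?h0; ring.
Qed.

Lemma VD_iota x : in_VD (iota x) <-> qre x = 0.
Proof.
case: x => p q; rewrite iota_expl /in_VD /qTr /qconj /qadd /qscal /=; split.
- by move/(f_equal q0) => /=; lra.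
- by move=> ->; apply: quatE => /=; ring.
Qed.

Lemma Nm_iota r : qNm qa qb (iota (QF 0 r)) = qscal (- (r ^+ 2 * d%:~R)).
Proof.
have [_ h1] := Y0 hd he.
rewrite iota_expl /qNm /qmul /qconj /qscal /=; rewrite -h1.
by apply: quatE => /=; ring.
Qed.

Lemma iota_int n : iota (eint n) = qscal n%:~R.
Proof. by rewrite /eint iota_expl; apply: quatE => /=; ring. Qed.

Lemma iota_LO n x : qadd (qscal n%:~R) (qscale 2 (iota x)) = iota (eadd (eint n) (escale 2 x)).
Proof.
case: x => p q; rewrite /eadd /escale /eint /= !iota_expl.
by apply: quatE => /=; ring.
Qed.

Lemma iota_sc k x : qscale k (iota x) = iota (escale k x).
Proof. by case: he => _ [_ [_ [h _]]]; rewrite h. Qed.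
End Emb2.

Lemma ocomb_in d u v : imag_quadratic d -> in_oE d (ocomb d u v).
Proof. by move=> hd; apply/(oE_char hd); exists u, v. Qed.

Lemma ocomb_add d u v u' v' : eadd (ocomb d u v) (ocomb d u' v') = ocomb d (u + u') (v + v').
Proof. by apply: qfE; rewrite /= !intrD; ring. Qed.

Lemma ocomb_sc d k u v : escale k%:~R (ocomb d u v) = ocomb d (k * u) (k * v).
Proof. by apply: qfE; rewrite /= !intrM; ring. Qed.

Lemma ocomb_eq d u v : ocomb d u v = eadd (escale u%:~R eone) (escale v%:~R (om d)).
Proof. by apply: qfE => /=; ring. Qed.

Lemma om_ocomb d : om d = ocomb d 0 1.
Proof. by apply: qfE => /=; ring. Qed.

Lemma eone_ocomb d : eone = ocomb d 1 0.
Proof. by apply: qfE => /=; ring. Qed.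

Lemma two_om0 d : imag_quadratic d -> 2 * qre (om d) = (tt d)%:~R.
Proof. by move=> _; rewrite /om /tt; case: ifP => _ /=; field. Qed.

Lemma om1_nz d : qim (om d) != 0.
Proof. by rewrite /om; case: ifP. Qed.

Section Main.
Variables (qa qb : rat) (O : quat -> Prop) (d : int) (iota : qf -> quat) (f : qf -> quat).
Hypothesis hd : imag_quadratic d.
Hypothesis he : is_embedding qa qb d iota.
Hypothesis hf1 : forall x, in_oE d x -> in_image iota (f x) /\ O (f x).
Hypothesis hf3 : forall z, in_image iota z -> O z -> exists x, in_oE d x /\ f x = z.
Hypothesis hf4 : forall x y, in_oE d x -> in_oE d y -> f (eadd x y) = qadd (f x) (f y).
Hypothesis hf5 : forall x y, in_oE d x -> in_oE d y -> f (emul d x y) = qmul qa qb (f x) (f y).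
Hypothesis hf6 : f eone = qone.

Lemma oE_sc k x : in_oE d x -> in_oE d (escale k%:~R x).
Proof. by case/(oE_char hd) => u [v ->]; rewrite ocomb_sc; apply: ocomb_in. Qed.

Lemma f0 : f ezero = Quat 0 0 0 0.
Proof.
have h0 : in_oE d ezero by rewrite (_ : ezero = ocomb d 0 0); [apply: ocomb_in | apply: qfE => /=; ring].
have := hf4 h0 h0; rewrite (_ : eadd ezero ezero = ezero); last by apply: qfE => /=; ring.
case: (f ezero) => a b c e E.
have E0 := f_equal q0 E; have E1 := f_equal q1 E; have E2 := f_equal q2 E; have E3 := f_equal q3 E.
move: E0 E1 E2 E3 => /= E0 E1 E2 E3.
by apply: quatE => /=; lra.
Qed.

Lemma f_nat y (n : nat) : in_oE d y -> f (escale n%:R y) = qscale n%:R (f y).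
Proof.
move=> hy; elim: n => [|n IH].
  rewrite (_ : escale 0%:R y = ezero); last by apply: qfE => /=; ring.
  by rewrite f0; apply: quatE => /=; ring.
have hn : in_oE d (escale n%:R y) by have := oE_sc n%:Z hy.
rewrite (_ : escale n.+1%:R y = eadd (escale n%:R y) y); last by apply: qfE => /=; rewrite -addn1 natrD; ring.
rewrite hf4 // IH; apply: quatE => /=; rewrite -addn1 natrD; ring.
Qed.

Lemma f_int y (k : int) : in_oE d y -> f (escale k%:~R y) = qscale k%:~R (f y).
Proof.
move=> hy; case: k => n; first exact: f_nat.
have hm := f_nat n.+1 hy.
have hn : in_oE d (escale (Negz n)%:~R y) by exact: oE_sc.
have hp : in_oE d (escale n.+1%:R y) by have := oE_sc n.+1%:Z hy.
have := hf4 hn hp.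
rewrite (_ : eadd (escale (Negz n)%:~R y) (escale n.+1%:R y) = ezero); last first.
  by apply: qfE => /=; rewrite NegzE; ring.
rewrite f0 hm NegzE.
case: (f (escale (- (Posz n.+1))%:~R y)) => a b c e E.
have E0 := f_equal q0 E; have E1 := f_equal q1 E; have E2 := f_equal q2 E; have E3 := f_equal q3 E.
move: E0 E1 E2 E3 => /= E0 E1 E2 E3.
apply: quatE => /=; rewrite intrN /=; lra.
Qed.

Lemma f_ocomb u v : f (ocomb d u v) = qadd (qscale u%:~R qone) (qscale v%:~R (f (om d))).
Proof.
have h1 : in_oE d eone by rewrite (eone_ocomb d); apply: ocomb_in.
have h2 : in_oE d (om d) by rewrite (om_ocomb d); apply: ocomb_in.
rewrite ocomb_eq hf4 ?f_int ?hf6 //; exact: oE_sc.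
Qed.

Lemma f_iota : (forall u v, f (ocomb d u v) = iota (ocomb d u v)) \/
               (forall u v, f (ocomb d u v) = iota (ocomb d (u + v * tt d) (- v))).
Proof.
have h2 : in_oE d (om d) by rewrite (om_ocomb d); apply: ocomb_in.
have [[th Eth] _] := hf1 h2.
case: (he) => hinj [hadd [hmul [hsc h1]]].
have Eq : emul d th th = eadd (eint (cc d)) (escale (tt d)%:~R th).
  apply: hinj; rewrite hmul Eth -hf5 // om_sq; last by case: hd.
  rewrite f_ocomb -Eth hadd hsc -h1 -hsc; congr qadd.
  congr iota; apply: qfE => /=; ring.
have [ht | ht] := roots hd Eq; [left | right] => u v; rewrite f_ocomb -Eth ht -h1 -!hsc -hadd;
  congr iota; apply: qfE => /=; rewrite ?intrD ?intrM ?intrN; ring.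
Qed.

Lemma part1 z : (exists x, in_oE d x /\ iota x = z) <-> (in_image iota z /\ O z).
Proof.
split.
- case=> x [hx <-]; split; first by exists x.
  case/(oE_char hd): hx => u [v ->].
  case: f_iota => hf.
  + by rewrite -hf; case: (hf1 (ocomb_in u v hd)).
  + have := hf (u + v * tt d) (- v).
    rewrite (_ : ocomb d (u + v * tt d + - v * tt d) (- - v) = ocomb d u v); last first.
      by apply: qfE => /=; rewrite ?intrD ?intrM ?intrN; ring.
    by move=> <-; case: (hf1 (ocomb_in (u + v * tt d) (- v) hd)).
- case=> hz hO; have [x [hx <-]] := hf3 hz hO.
  case/(oE_char hd): hx => u [v ->].
  case: f_iota => hfi; rewrite hfi; [exists (ocomb d u v) | exists (ocomb d (u + v * tt d) (- v))]; split => //; exact: ocomb_in.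
Qed.
End Main.

Lemma Delta_val d Delta : imag_quadratic d -> is_fund_disc d Delta ->
  Delta%:~R = 4 * d%:~R * qim (om d) ^+ 2.
Proof.
move=> hd [w1 [w2 [hc hD]]].
have hw1 : in_oE d w1 by apply/hc; exists 1, 0; apply: qfE => /=; ring.
have hw2 : in_oE d w2 by apply/hc; exists 0, 1; apply: qfE => /=; ring.
have [u1 [v1 e1]] := (oE_char hd w1).1 hw1.
have [u2 [v2 e2]] := (oE_char hd w2).1 hw2.
have h1 : in_oE d eone by rewrite (eone_ocomb d); apply: ocomb_in.
have h2 : in_oE d (om d) by rewrite (om_ocomb d); apply: ocomb_in.
have [x [y E1]] := (hc eone).1 h1.
have [x' [y' E2]] := (hc (om d)).1 h2.
have ho1 := om1_nz d.
move: E1 E2 hD; rewrite e1 e2 /ocomb.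
set o0 := qre (om d); set o1 := qim (om d).
move=> E1 E2 hD.
have E1r := f_equal qre E1; have E1i := f_equal qim E1.
have E2r := f_equal qre E2; have E2i := f_equal qim E2.
move: E1r E1i E2r E2i => /= E1r E1i E2r E2i.
rewrite -/o0 -/o1 in E2r E2i.
have A : x%:~R * v1%:~R + y%:~R * v2%:~R = 0 :> rat.
  have : (x%:~R * v1%:~R + y%:~R * v2%:~R) * o1 = 0 :> rat by lra.
  by move/eqP; rewrite mulf_eq0 (negPf ho1) orbF => /eqP.
have B : x'%:~R * v1%:~R + y'%:~R * v2%:~R = 1 :> rat.
  have : (x'%:~R * v1%:~R + y'%:~R * v2%:~R - 1) * o1 = 0 :> rat by lra.
  by move/eqP; rewrite mulf_eq0 (negPf ho1) orbF subr_eq0 => /eqP.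
have A' : o0 * (x%:~R * v1%:~R + y%:~R * v2%:~R) = 0 by rewrite A mulr0.
have B' : o0 * (x'%:~R * v1%:~R + y'%:~R * v2%:~R) = o0 by rewrite B mulr1.
have C : x%:~R * u1%:~R + y%:~R * u2%:~R = 1 :> rat.
  have e : x%:~R * (u1%:~R + v1%:~R * o0) + y%:~R * (u2%:~R + v2%:~R * o0) - (x%:~R * u1%:~R + y%:~R * u2%:~R) = o0 * (x%:~R * v1%:~R + y%:~R * v2%:~R) :> rat by ring.
  rewrite A' -E1r in e; lra.
have D : x'%:~R * u1%:~R + y'%:~R * u2%:~R = 0 :> rat.
  have e : x'%:~R * (u1%:~R + v1%:~R * o0) + y'%:~R * (u2%:~R + v2%:~R * o0) - (x'%:~R * u1%:~R + y'%:~R * u2%:~R) = o0 * (x'%:~R * v1%:~R + y'%:~R * v2%:~R) :> rat by ring.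
  rewrite B' -E2r in e; lra.
have hR : (x%:~R * y'%:~R - y%:~R * x'%:~R) * (u1%:~R * v2%:~R - u2%:~R * v1%:~R) = 1 :> rat.
  have -> : (x%:~R * y'%:~R - y%:~R * x'%:~R) * (u1%:~R * v2%:~R - u2%:~R * v1%:~R) =
    (x%:~R * u1%:~R + y%:~R * u2%:~R) * (x'%:~R * v1%:~R + y'%:~R * v2%:~R) -
    (x%:~R * v1%:~R + y%:~R * v2%:~R) * (x'%:~R * u1%:~R + y'%:~R * u2%:~R) :> rat by ring.
  by rewrite C B A D; ring.
have hI : (x * y' - y * x') * (u1 * v2 - u2 * v1) = 1.
  apply: (@intr_inj rat); rewrite !(intrM, intrB) /=; exact: hR.
have hD2 : (u1 * v2 - u2 * v1) * (u1 * v2 - u2 * v1) = 1.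
  have := intUnitRing.unitzPl hI; rewrite qualifE => /orP [/eqP -> | /eqP ->] //.
have hD2r : (u1%:~R * v2%:~R - u2%:~R * v1%:~R) ^+ 2 = 1 :> rat.
  by rewrite expr2 -!intrM -intrB -intrM hD2.
rewrite hD /eTr /emul /=.
apply: (@etrans _ _ (4 * d%:~R * o1 ^+ 2 * (u1%:~R * v2%:~R - u2%:~R * v1%:~R) ^+ 2)); first ring.
by rewrite hD2r mulr1.
Qed.

Theorem lemma3p2 (qa qb : rat) (O : quat -> Prop) (d Delta : int)
    (iota : qf -> quat) :
  qa < 0 -> qb < 0 ->
  is_Eichler_order qa qb O ->
  imag_quadratic d ->
  is_fund_disc d Delta ->
  is_optimal_embedding qa qb d O iota ->
  (forall z, (exists x, in_oE d x /\ iota x = z) <-> (in_image iota z /\ O z)) /\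
  (exists a, in_image iota a /\ in_VD a /\ qNm qa qb a = qscal (- Delta%:~R)) /\
  (forall a, in_image iota a -> in_VD a -> qNm qa qb a = qscal (- Delta%:~R) ->
     (in_image iota a /\ in_LO O a) /\
     (forall z, (in_image iota z /\ in_LO O z) <->
                exists n : int, z = qscale n%:~R a)).
Proof.
move=> hqa hqb _ hd hfd [he [f [hf1 [hf2 [hf3 [hf4 [hf5 hf6]]]]]]].
have hd0 : d < 0 by case: hd.
have P1 := part1 hd he hf1 hf3 hf4 hf5 hf6.
have hDel := Delta_val hd hfd.
have h2o := two_om0 hd.
set o1 := qim (om d) in hDel *; set o0 := qre (om d) in h2o *.
have hinj : injective iota by case: he.
split; first exact: P1.
split.
  exists (iota (QF 0 (2 * o1))); split; first by eexists.
  split; first by apply/(VD_iota hd0 he).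
  by rewrite (Nm_iota hd0 he) hDel; congr qscal; ring.
move=> a [e <-] hVD hNm.
have hre := (VD_iota hd0 he e).1 hVD.
have ee : e = QF 0 (qim e) by case: e hre hVD hNm => ?? /= ->.
move: hNm hVD; rewrite ee; set r := qim e => hNm hVD.
rewrite (Nm_iota hd0 he) hDel in hNm.
have hdr : (d%:~R : rat) != 0 by apply: ltr0_neq0; rewrite ltrz0.
have hr : (r - 2 * o1) * (r + 2 * o1) = 0.
  have := f_equal q0 hNm => /= h.
  apply: (mulfI hdr); rewrite mulr0; lra.
have [s [hs er]] : exists s : int, (s = 1 \/ s = -1) /\ r = s%:~R * (2 * o1).
  move/eqP: hr; rewrite mulf_eq0 => /orP [/eqP h | /eqP h].
  - by exists 1; split; [left | rewrite mul1r; lra].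
  - by exists (-1); split; [right | rewrite mulN1r; lra].
have hO : forall k : int, O (iota (ocomb d 0 k)).
  by move=> k; case: (P1 (iota (ocomb d 0 k))).1 => //; exists (ocomb d 0 k); split => //; exact: ocomb_in.
have hLO : forall k : int, in_LO O (iota (escale k%:~R (QF 0 r))).
  move=> k; split; last by apply/(VD_iota hd0 he) => /=; rewrite mulr0.
  exists (k * - (s * tt d)), (iota (ocomb d 0 (k * s))); split; first exact: hO.
  rewrite (iota_LO hd0 he); congr iota; apply: qfE => /=; rewrite ?er !(intrM, intrN) -?h2o -/o0 -/o1; ring.
split.
  split; first by eexists.
  by have := hLO 1; rewrite (_ : escale 1%:~R (QF 0 r) = QF 0 r) //; apply: qfE => /=; ring.
move=> z; split.
- case=> [[e' ez] [[n [y [hy zy]]] hVz]].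
  have yimg : iota (escale (1/2) (eadd e' (eint (- n)))) = y.
    rewrite -(iota_sc he); case: (he) => _ [hadd _]; rewrite hadd ez (iota_int hd0 he) zy.
    case: (y) => y0 y1 y2 y3; apply: quatE => /=; rewrite ?intrN; field; done.
  have [x [hx xy]] := (P1 y).2 (conj (ex_intro _ _ yimg) hy).
  have [u [v ex]] := (oE_char hd x).1 hx.
  have E' : e' = eadd (eint n) (escale 2 (ocomb d u v)).
    by apply: hinj; rewrite -(iota_LO hd0 he) -ex xy ez zy.
  have hre' : qre e' = 0 by apply/(VD_iota hd0 he); rewrite ez.
  exists (s * v); rewrite -ez (iota_sc he); congr iota; apply: qfE => /=.
  + by rewrite hre' mulr0.
  + rewrite E' /= er; case: hs => ->; rewrite ?intrM ?intrN /= -/o1; ring.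
- case=> k ->; rewrite (iota_sc he); split; first by eexists.
  exact: hLO.
Qed.
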